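(* Let $\mathsf P$ be a network coding problem. A rate-capacity tuple $(\lambda,\omega)$ is $0$-achievable subject to a routing constraint if and only if \[(\lambda,\omega)\in\mathsf{CL}\big(\mathrm{proj}_{\mathsf P}[\Gamma_{AA}\cap\mathcal C_T(\mathsf P)\cap\mathcal C_D(\mathsf P)\cap\mathcal C_I(\mathsf P)]\big).\]
   Context: A network is $\mathsf G=(\mathcal V,\mathcal E)$, $\mathcal V$ a finite set of nodes, $\mathcal E$ a finite set of hyperedges, each $e$ with tail $\mathrm{tail}(e)\in\mathcal V$ and head $\mathrm{head}(e)\subseteq\mathcal V$, without directed cycles. A connection constraint $\mathsf M=(\mathcal S,O,D)$: finite source index set $\mathcal S$, $O:\mathcal S\to2^{\mathcal V}$ (where source $s$ is available), $D:\mathcal S\to2^{\mathcal V}$ (sinks of $s$). $\mathsf P=(\mathsf G,\mathsf M)$. Sources are imaginary edges with $\mathrm{head}(s)=O(s)$; $\mathrm{in}(e)=\{f\in\mathcal S\cup\mathcal E:\mathrm{tail}(e)\in\mathrm{head}(f)\}$ for $e\in\mathcal E$, $\mathrm{in}(u)=\{f\in\mathcal S\cup\mathcal E:u\in\mathrm{head}(f)\}$ for $u\in\mathcal V$. A rate-capacity tuple is $(\lambda,\omega)$, $\lambda:\mathcal S\to\mathbb R_{\ge0}$, $\omega:\mathcal E\to\mathbb R_{\ge0}$. A routing subnetwork is a subset $\mathcal T\subseteq\mathcal S\cup\mathcal E$ with $|\mathcal T\cap\mathcal S|=1$ (the unique source in it is denoted $\nu(\mathcal T)$) such that $\mathrm{in}(e)\cap\mathcal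 T\ne\emptyset$ for every $e\in\mathcal T\cap\mathcal E$. A tuple $(\lambda,\omega)$ is $0$-achievable subject to a routing constraint if there is a (finite) collection of routing subnetworks $\mathcal T_i$ with capacities $c_i\ge0$ such that: (R1) $\omega(e)\ge\sum_{i:e\in\mathcal T_i}c_i$ for every $e\in\mathcal E$; (R2) for every $i$ and every $u\in D(\nu(\mathcal T_i))$ there is $e\in\mathcal T_i$ with $u\in\mathrm{head}(e)$; (R3) $\lambda(s)=\sum_{i:\nu(\mathcal T_i)=s}c_i$ for every $s\in\mathcal S$. $\mathcal H[\mathcal S\cup\mathcal E]$ is the set of real functions on subsets of $\mathcal S\cup\mathcal E$; $g(\alpha\mid\beta)=g(\alpha\cup\beta)-g(\beta)$. A function $h$ is atomic if there is $\mathcal T\subseteq\mathcal S\cup\mathcal E$ with $h(\beta)=1$ when $\beta\cap\mathcal T\neq\emptyset$ and $h(\beta)=0$ otherwise; it is almost atomic if $h=\sum_ic_ih^i$ (finite sum) with $c_i\ge0$ and each $h^i$ atomic. $\Gamma_{AA}$ is the set of almost atomic functions. $\mathcal C_I(\mathsf P)=\{h:h(\mathcal S)=\sum_sh(s)\}$, $\mathcal C_T(\mathsf P)=\{h:h(e\mid\mathrm{in}(e))=0\ \forall e\in\mathcal E\}$, $\mathcal C_D(\mathsf P)=\{h:h(s\mid\mathrm{in}(u))=0\ \forall s,u\in D(s)\}$. $\mathrm{proj}_{\mathsf P}[h]=(h(s),s\in\mathcal S;h(e),e\in\mathcal E)$, applied elementwise to sets. For a set $\mathcal R$ of tuples, $\mathsf{CL}(\mathcal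 R)$ is the set of $(\lambda,\omega)$ such that there exist $(\lambda^n,\omega^n)\in\mathcal R$ and $c_n>0$ with $\lim_nc_n\omega^n(e)\le\omega(e)$ and $\lim_nc_n\lambda^n(s)\ge\lambda(s)$ for all $e,s$. *)

(* Defs.v *)
From HB Require Import structures.
From mathcomp Require Import all_boot all_order all_algebra.
From mathcomp Require Import boolp reals topology normedtype sequences.

Set Implicit Arguments.
Unset Strict Implicit.
Unset Printing Implicit Defensive.

Import Order.TTheory GRing.Theory Num.Theory.
Import numFieldNormedType.Exports.
Local Open Scope ring_scope.
Local Open Scope classical_set_scope.

(* A network coding problem P = (G, M):
   nodes V, hyperedges E with tail(e) in V and head(e) subset of V,
   source indices S with O(s) (where s is available) and D(s) (sinks of s). *)
Record problem := Problem {
  node : finType;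
  edge : finType;
  src  : finType;
  tail : edge -> node;
  head : edge -> {set node};
  orig : src -> {set node};
  dest : src -> {set node}
}.

(* The ground set S ∪ E (disjoint union); sources are imaginary edges. *)
Definition SE (P : problem) : finType := (src P + edge P)%type.

Definition headf (P : problem) (f : SE P) : {set node P} :=
  match f with inl s => orig s | inr e => head e end.

Definition in_edge (P : problem) (e : edge P) : {set SE P} :=
  [set f : SE P | tail e \in headf f].

Definition in_node (P : problem) (u : node P) : {set SE P} :=
  [set f : SE P | u \in headf f].

Definition step (P : problem) : rel (node P) :=
  fun u v => [exists e : edge P, (tail e == u) && (v \in head e)].

Definition acyclic (P : problem) : Prop :=
  forall u v : node P, @step P u v -> ~~ connect (@step P) v u.

Definition routing_subnetwork (P : problem) (T : {set SE P}) : Prop :=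
  #|[set s : src P | inl s \in T]| = 1%N /\
  (forall e : edge P, inr e \in T -> in_edge e :&: T != set0).

(* 0-achievability subject to a routing constraint.  Since each T_i contains
   exactly one source, "nu(T_i) = s" is expressed as "inl s \in T_i". *)
Definition achievable0 (R : realType) (P : problem)
    (lam : src P -> R) (om : edge P -> R) : Prop :=
  exists (k : nat) (T : 'I_k -> {set SE P}) (c : 'I_k -> R),
    [/\ (forall i, routing_subnetwork (T i)),
        (forall i, 0 <= c i),
        (forall e : edge P, \sum_(i | inr e \in T i) c i <= om e),
        (forall i (s : src P) (u : node P), inl s \in T i -> u \in dest s ->
            exists2 f : SE P, f \in T i & u \in headf f)
      &
        (forall s : src P, lam s = \sum_(i | inl s \in T i) c i)].

Definition setfun (R : realType) (P : problem) := {set SE P} -> R.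

Definition condf (R : realType) (P : problem) (g : setfun R P)
    (a b : {set SE P}) : R := g (a :|: b) - g b.

Definition atomic_fun (R : realType) (P : problem) (T : {set SE P}) : setfun R P :=
  fun b => if b :&: T != set0 then 1 else 0.

Definition is_atomic (R : realType) (P : problem) (h : setfun R P) : Prop :=
  exists T : {set SE P}, h = atomic_fun R T.

Definition almost_atomic (R : realType) (P : problem) (h : setfun R P) : Prop :=
  exists (k : nat) (c : 'I_k -> R) (hs : 'I_k -> setfun R P),
    [/\ (forall i, 0 <= c i), (forall i, is_atomic (hs i))
      & h = fun b => \sum_(i < k) c i * hs i b].

Definition C_I (R : realType) (P : problem) (h : setfun R P) : Prop :=
  h [set f : SE P | if f is inl _ then true else false]
  = \sum_(s : src P) h [set (inl s : SE P)].

Definition C_T (R : realType) (P : problem) (h : setfun R P) : Prop :=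
  forall e : edge P, condf h [set (inr e : SE P)] (in_edge e) = 0.

Definition C_D (R : realType) (P : problem) (h : setfun R P) : Prop :=
  forall (s : src P) (u : node P), u \in dest s ->
    condf h [set (inl s : SE P)] (in_node u) = 0.

Definition tuple_t (R : realType) (P : problem) : Type :=
  ((src P -> R) * (edge P -> R))%type.

Definition proj (R : realType) (P : problem) (h : setfun R P) : tuple_t R P :=
  (fun s => h [set (inl s : SE P)], fun e => h [set (inr e : SE P)]).

Definition proj_region (R : realType) (P : problem) (x : tuple_t R P) : Prop :=
  exists h : setfun R P,
    [/\ almost_atomic h, C_T h, C_D h, C_I h & proj h = x].

Definition CL (R : realType) (P : problem) (Rg : tuple_t R P -> Prop)
    (x : tuple_t R P) : Prop :=
  exists (y : nat -> tuple_t R P) (c : nat -> R),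
    [/\ (forall n, Rg (y n)), (forall n, 0 < c n),
        (forall e : edge P, exists2 l : R,
            (fun n => c n * (y n).2 e) @ \oo --> l & l <= x.2 e)
      & (forall s : src P, exists2 l : R,
            (fun n => c n * (y n).1 s) @ \oo --> l & x.1 s <= l)].

(* Main.v *)
Require Import Defs.
From HB Require Import structures.
From mathcomp Require Import all_boot all_order all_algebra.
From mathcomp Require Import boolp reals topology normedtype sequences.
Import Order.TTheory GRing.Theory Num.Theory.
Import numFieldNormedType.Exports.
From mathcomp Require classical_sets.
Local Open Scope ring_scope.

Section Comb.
Variables (R : realType) (P : problem).
Hypothesis acyc : acyclic P.

Definition U := {set SE P}.

Definition srcs (T : U) := [set s : src P | inl s \in T].

Definition goodb (T : U) : bool :=
  [&& #|srcs T| == 1%N,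
      [forall e : edge P, (inr e \in T) ==> (in_edge e :&: T != set0)] &
      [forall s : src P, forall u : node P, ((inl s \in T) && (u \in dest s)) ==>
          [exists f, (f \in T) && (u \in headf f)]]].

Definition Lw (w : U -> R) (x : SE P) := \sum_(T : U | x \in T) w T.

Lemma atomic01 (T b : U) : atomic_fun R T b = (b :&: T != set0)%:R.
Proof. by rewrite /atomic_fun; case: ifP. Qed.

Lemma set1I0 (T : U) (x : SE P) : ([set x] :&: T != set0) = (x \in T).
Proof.
apply/set0Pn/idP => [[y]|xT]; first by rewrite !inE => /andP [/eqP -> ].
by exists x; rewrite !inE eqxx.
Qed.

Lemma atomic1 (T : U) (x : SE P) : atomic_fun R T [set x] = (x \in T)%:R.
Proof. by rewrite atomic01 set1I0. Qed.

Lemma no_sourcefree (T : U) : T != set0 ->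
  (forall e, inr e \in T -> in_edge e :&: T != set0) ->
  exists s, inl s \in T.
Proof.
move=> /set0Pn [x xT] HT.
apply/not_existsP => nos.
have [e0 e0T] : exists e0, inr e0 \in T.
  by case: x xT => [s sT|e eT]; [case: (nos s) | exists e].
pose cnt (e : edge P) := #|[set v | connect (@step P) v (tail e)]|.
case: (@arg_minnP _ e0 (fun e => inr e \in T) cnt e0T) => e eT emin.
have /set0Pn [f] := HT e eT.
rewrite !inE => /andP [].
case: f => [s _ sT|e' tin e'T]; first by case: (nos s).
have st : @step P (tail e') (tail e).
  by apply/existsP; exists e'; rewrite eqxx.
have := emin e' e'T; rewrite leqNgt => /negP; apply.
apply: proper_card; apply/properP; split.
  apply/subsetP => v; rewrite !inE => cv.
  by apply: connect_trans cv (connect1 st).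
exists (tail e); first by rewrite inE connect0.
by rewrite inE; apply: acyc.
Qed.


Definition hw (w : U -> R) : setfun R P := fun b => \sum_(T : U) w T * atomic_fun R T b.

Lemma hw1 w x : hw w [set x] = Lw w x.
Proof.
rewrite /hw /Lw; under eq_bigr do rewrite atomic1.
rewrite [RHS]big_mkcond; apply: eq_bigr => T _.
by case: (_ \in _); rewrite ?mulr1 ?mulr0.
Qed.

Lemma region_of_w (w : U -> R) : (forall T, 0 <= w T) -> (forall T, ~~ goodb T -> w T = 0) ->
  proj_region (fun s => Lw w (inl s), fun e => Lw w (inr e)).
Proof.
move=> w0 wg.
exists (hw w); split.
- exists #|U|, (fun i => w (enum_val i)), (fun i => atomic_fun R (enum_val i)); split => //.
    by move=> i; exists (enum_val i).
  apply: funext => b; rewrite /hw.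
  by rewrite -(big_enum_val (fun T => w T * atomic_fun R T b)); apply: eq_bigl.
- move=> e; rewrite /condf /hw -sumrB; apply: big1 => T _; rewrite -mulrBr.
  case: (boolP (goodb T)) => gT; last by rewrite wg ?mul0r.
  move/and3P: gT => [_ /forallP He _].
  rewrite !atomic01 setIUl.
  case: (boolP (inr e \in T)) => eT.
    by rewrite setU_eq0 negb_and set1I0 eT /= (implyP (He e) eT) subrr mulr0.
  have -> : [set inr e] :&: T = set0 by apply/eqP; rewrite -[_ == _]negbK set1I0 eT.
  by rewrite set0U subrr mulr0.
- move=> s u us; rewrite /condf /hw -sumrB; apply: big1 => T _; rewrite -mulrBr.
  case: (boolP (goodb T)) => gT; last by rewrite wg ?mul0r.
  move/and3P: gT => [_ _ /forallP Hd].
  rewrite !atomic01 setIUl.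
  case: (boolP (inl s \in T)) => sT.
    have /existsP [f /andP [fT uf]] := implyP (forallP (Hd s) u) (introT andP (conj sT us)).
    have -> : in_node u :&: T != set0 by apply/set0Pn; exists f; rewrite !inE uf fT.
    by rewrite setU_eq0 negb_and set1I0 sT /= subrr mulr0.
  have -> : [set inl s] :&: T = set0 by apply/eqP; rewrite -[_ == _]negbK set1I0 sT.
  by rewrite set0U subrr mulr0.
- rewrite /C_I /hw exchange_big /=; apply: eq_bigr => T _; rewrite -mulr_sumr.
  case: (boolP (goodb T)) => gT; last by rewrite wg ?mul0r.
  move/and3P: gT => [/cards1P [s0 Hs0] _ _].
  have s0T : inl s0 \in T by move: (set11 s0); rewrite -Hs0 inE.
  congr (_ * _); rewrite atomic01 (bigD1 s0) //= atomic1 s0T big1 ?addr0.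
    by have -> : [set f : SE P | if f is inl _ then true else false] :&: T != set0
      by apply/set0Pn; exists (inl s0); rewrite !inE s0T.
  move=> s ns; rewrite atomic1; case: (boolP (inl s \in T)) => // sT.
  have : s \in srcs T by rewrite inE.
  by rewrite Hs0 inE (negPf ns).
- by rewrite /proj; congr pair; apply: funext => x; rewrite hw1.
Qed.


Lemma atomic_mono (T a b : U) : atomic_fun R T b <= atomic_fun R T (a :|: b).
Proof.
rewrite !atomic01; case: (boolP (b :&: T != set0)) => H; last by rewrite ler0n.
by rewrite setIUl setU_eq0 negb_and H orbT.
Qed.

Lemma subr_ge0_aux (x y : R) : y <= x -> 0 <= x - y.
Proof. by rewrite subr_ge0. Qed.

Lemma term0 (k : nat) (c F G : 'I_k -> R) : (forall i, 0 <= c i) -> (forall i, G i <= F i) ->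
  \sum_i c i * F i - \sum_i c i * G i = 0 -> forall i, c i != 0 -> F i = G i.
Proof.
move=> c0 GF; rewrite -sumrB; under eq_bigr do rewrite -mulrBr.
move=> Hs i ci.
have := @psumr_eq0P _ _ xpredT (fun j => c j * (F j - G j)) (fun j _ => mulr_ge0 (c0 j) (subr_ge0_aux _ _ (GF j))) Hs i isT.
by move/eqP; rewrite mulf_eq0 (negPf ci) /= subr_eq0 => /eqP.
Qed.

Lemma sum_src_card (T : U) : \sum_(s : src P) (inl s \in T)%:R = #|srcs T|%:R :> R.
Proof.
rewrite -natr_sum; congr (_%:R); rewrite -sum1_card [RHS]big_mkcond /=.
by apply: eq_bigr => s _; rewrite inE; case: (_ \in _).
Qed.

Lemma decomp (h : setfun R P) : almost_atomic h -> C_T h -> C_D h -> C_I h ->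
  exists w : U -> R, [/\ (forall T, 0 <= w T), (forall T, ~~ goodb T -> w T = 0)
     & (forall x, h [set x] = Lw w x)].
Proof.
move=> [k [c [hs [c0 hat ->]]]] CT CD CI.
have /choice [Tf HT] : forall i, exists T : U, hs i = atomic_fun R T.
  by move=> i; case: (hat i) => T ->; exists T.
have hsE : hs = fun i => atomic_fun R (Tf i) by apply: funext => i; apply: HT.
subst hs.
have key : forall i, c i != 0 -> Tf i != set0 -> goodb (Tf i).
  move=> i ci Ti.
  have H1 : forall e, inr e \in Tf i -> in_edge e :&: Tf i != set0.
    move=> e eT.
    have := @term0 k c (fun i => atomic_fun R (Tf i) ([set inr e] :|: in_edge e))
      (fun i => atomic_fun R (Tf i) (in_edge e)) c0 (fun i => atomic_mono _ _ _) (CT e) i ci.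
    rewrite !atomic01 setIUl setU_eq0 negb_and set1I0 eT /=.
    by case: (_ != set0) => //; move/eqP; rewrite eqr_nat.
  have H2 : forall s u, inl s \in Tf i -> u \in dest s -> in_node u :&: Tf i != set0.
    move=> s u sT us.
    have := @term0 k c (fun i => atomic_fun R (Tf i) ([set inl s] :|: in_node u))
      (fun i => atomic_fun R (Tf i) (in_node u)) c0 (fun i => atomic_mono _ _ _) (CD s u us) i ci.
    rewrite !atomic01 setIUl setU_eq0 negb_and set1I0 sT /=.
    by case: (_ != set0) => //; move/eqP; rewrite eqr_nat.
  have H3 : \sum_(s : src P) (inl s \in Tf i)%:R =
      atomic_fun R (Tf i) [set f : SE P | if f is inl _ then true else false].
    apply: (@term0 k c (fun i => \sum_(s : src P) (inl s \in Tf i)%:R)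
      (fun i => atomic_fun R (Tf i) [set f : SE P | if f is inl _ then true else false]) c0) => //.
    - move=> j; rewrite atomic01; case: (boolP (_ != set0)); last by move=> _; apply: sumr_ge0 => s _; apply: ler0n.
      case/set0Pn => f; rewrite !inE; case: f => // s /= sT.
      rewrite (bigD1 s) //= sT lerDl; apply: sumr_ge0 => *; apply: ler0n.
    - move: CI; rewrite /C_I /= => ->.
      rewrite exchange_big /=; apply/eqP; rewrite subr_eq0; apply/eqP; apply: eq_bigr => j _.
      by rewrite mulr_sumr; apply: eq_bigr => s _; rewrite atomic1.
  have [s0 s0T] := no_sourcefree _ Ti H1.
  apply/and3P; split.
  - move: H3; rewrite sum_src_card atomic01.
    have -> : [set f : SE P | if f is inl _ then true else false] :&: Tf i != set0.
      by apply/set0Pn; exists (inl s0); rewrite !inE s0T.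
    by move/eqP; rewrite eqr_nat.
  - by apply/forallP => e; apply/implyP; apply: H1.
  - apply/forallP => s; apply/forallP => u; apply/implyP => /andP [sT us].
    case/set0Pn: (H2 s u sT us) => f; rewrite !inE => /andP [uf fT].
    by apply/existsP; exists f; rewrite fT uf.
pose w (T : U) := \sum_(i | (Tf i == T) && goodb T) c i.
exists w; split.
- by move=> T; apply: sumr_ge0 => i _.
- by move=> T gT; apply: big_pred0 => i; rewrite (negPf gT) andbF.
move=> x; rewrite /Lw /w.
under eq_bigr do rewrite atomic1.
transitivity (\sum_(i | (x \in Tf i) && goodb (Tf i)) c i).
  rewrite [RHS]big_mkcond; apply: eq_bigr => i _.
  case: (boolP (x \in Tf i)) => xT /=; last by rewrite mulr0.
  case: (boolP (goodb (Tf i))) => gT; first by rewrite mulr1.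
  have [->|ci] := eqVneq (c i) 0; first by rewrite mul0r.
  have : Tf i != set0 by apply/set0Pn; exists x.
  by move/(key i ci); rewrite (negPf gT).
rewrite (partition_big Tf (fun T => x \in T)); last by move=> i /andP [].
apply: eq_bigr => T xT; apply: eq_bigl => i.
case: (eqVneq (Tf i) T) => [E|ne]; last by rewrite andbF. by rewrite E xT andbT.
Qed.


Lemma Lw_good (w : U -> R) x : (forall T, ~~ goodb T -> w T = 0) ->
  Lw w x = \sum_(T in [pred T : U | goodb T] | x \in T) w T.
Proof.
move=> wg; rewrite /Lw (bigID goodb) /= [X in _ + X]big1 ?addr0.
  by apply: eq_bigl => T; rewrite inE andbC.
by move=> T /andP [_ ng]; apply: wg.
Qed.

Lemma achieve_of_w (lam : src P -> R) (om : edge P -> R) (w : U -> R) :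
  (forall T, 0 <= w T) -> (forall T, ~~ goodb T -> w T = 0) ->
  (forall s, Lw w (inl s) = lam s) -> (forall e, Lw w (inr e) <= om e) ->
  achievable0 lam om.
Proof.
move=> w0 wg Hl Ho.
pose G := [pred T : U | goodb T].
have gv : forall i : 'I_#|G|, goodb (enum_val i).
  by move=> i; have := enum_valP i; rewrite inE.
exists #|G|, (fun i => enum_val i), (fun i => w (enum_val i)); split.
- move=> i; move/and3P: (gv i) => [/eqP Hc /forallP He _]; split => //.
  by move=> e; apply: implyP (He e).
- by move=> i.
- move=> e; rewrite -(@big_enum_val_cond _ _ _ U G (fun T : U => inr e \in T) w).
  by rewrite -Lw_good.
- move=> i s u sT us; move/and3P: (gv i) => [_ _ /forallP Hd].
  have /existsP [f /andP [fT uf]] := implyP (forallP (Hd s) u) (introT andP (conj sT us)).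
  by exists f.
- move=> s; rewrite -(@big_enum_val_cond _ _ _ U G (fun T : U => inl s \in T) w).
  by rewrite -Lw_good.
Qed.

Lemma w_of_achieve (lam : src P -> R) (om : edge P -> R) :
  achievable0 lam om -> exists w : U -> R,
  [/\ (forall T, 0 <= w T), (forall T, ~~ goodb T -> w T = 0),
      (forall s, Lw w (inl s) = lam s) & (forall e, Lw w (inr e) <= om e)].
Proof.
move=> [k [T [c [HR c0 R1 R2 R3]]]].
have gT : forall i, goodb (T i).
  move=> i; case: (HR i) => Hc He; apply/and3P; split.
  - by apply/eqP.
  - by apply/forallP => e; apply/implyP; apply: He.
  - apply/forallP => s; apply/forallP => u; apply/implyP => /andP [sT us].
    by have [f fT uf] := R2 i s u sT us; apply/existsP; exists f; rewrite fT uf.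
pose w (X : U) := \sum_(i | T i == X) c i.
have LwE : forall x, Lw w x = \sum_(i | x \in T i) c i.
  move=> x; rewrite /Lw /w [RHS](partition_big T (fun X => x \in X)) //.
  apply: eq_bigr => X xX; apply: eq_bigl => i.
  by case: (eqVneq (T i) X) => [E|ne]; rewrite ?andbF // E xX.
exists w; split.
- by move=> X; apply: sumr_ge0.
- move=> X ng; apply: big1 => i /eqP E; exfalso.
  by move: (gT i); rewrite E (negPf ng).
- by move=> s; rewrite LwE R3.
- by move=> e; rewrite LwE.
Qed.

End Comb.

Module TopoPart.
Import numFieldNormedType.Exports.
Import ArrowAsProduct.
Import classical_sets.
Local Open Scope classical_set_scope.

Section Topo.
Variables (R : realType) (P : problem).
Hypothesis acyc : acyclic P.
Local Notation goodb := (@goodb P).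
Local Notation Lw := (@Lw R P).

Lemma cl_to_p (lam : src P -> R) (om : edge P -> R) :
  CL (@proj_region R P) (lam, om) -> exists p : U P -> R,
  [/\ (forall T, 0 <= p T), (forall T, ~~ goodb T -> p T = 0),
      (forall s, lam s <= Lw p (inl s)) & (forall e, Lw p (inr e) <= om e)].
Proof.
move=> [y [c [Hy c0 He Hs]]].
have /choice [w Hw] : forall n, exists w : U P -> R,
   [/\ (forall T, 0 <= w T), (forall T, ~~ goodb T -> w T = 0),
       (forall s, (y n).1 s = Lw w (inl s)) & (forall e, (y n).2 e = Lw w (inr e))].
  move=> n; have [h [aah CTh CDh CIh <-]] := Hy n.
  have [w [w0 wg wE]] := @decomp R P acyc h aah CTh CDh CIh.
  by exists w; split => // x; rewrite /proj /= wE.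
pose a n T := c n * w n T.
have LwA : forall n x, Lw (a n) x = c n * Lw (w n) x.
  by move=> n x; rewrite /Lw mulr_sumr.
have a0 : forall n T, 0 <= a n T.
  by move=> n T; apply: mulr_ge0; [apply: ltW | case: (Hw n)].
have ag : forall n T, ~~ goodb T -> a n T = 0.
  by move=> n T gT; rewrite /a; case: (Hw n) => _ -> //; rewrite mulr0.
have /choice [l Hl] : forall e, exists l : R,
    (fun n => c n * (y n).2 e) @ \oo --> l /\ l <= om e.
  by move=> e; have [l ? ?] := He e; exists l.
have /choice [m Hm] : forall s, exists m : R,
    (fun n => c n * (y n).1 s) @ \oo --> m /\ lam s <= m.
  by move=> s; have [m ? ?] := Hs s; exists m.
pose S n := \sum_(s : src P) c n * (y n).1 s.
have cvS : S @ \oo --> \sum_(s : src P) m s.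
  apply: (@cvg_big R (src P) +%R 0 xpredT add_continuous nat \oo).
  by move=> s _; case: (Hm s).
pose M := \sum_(s : src P) m s + 1.
have evS : \forall n \near \oo, S n < M.
  have := @cvgr_lt R nat \oo _ S _ cvS M; apply; by rewrite /M ltrDl ltr01.
have yE : forall n s, c n * (y n).1 s = Lw (a n) (inl s).
  by move=> n s; rewrite LwA; case: (Hw n) => _ _ ->.
have yE2 : forall n e, c n * (y n).2 e = Lw (a n) (inr e).
  by move=> n e; rewrite LwA; case: (Hw n) => _ _ _ ->.
have aS : forall n T, a n T <= S n.
  move=> n T; have S0 : forall s, 0 <= c n * (y n).1 s.
    by move=> s; rewrite yE; apply: sumr_ge0 => *; apply: a0.
  case: (boolP (goodb T)) => gT; last by rewrite ag //; apply: sumr_ge0 => *; apply: S0.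
  move/and3P: gT => [/cards1P [s0 Hs0] _ _].
  have s0T : inl s0 \in T by move: (set11 s0); rewrite -Hs0 inE.
  apply: (@le_trans _ _ (c n * (y n).1 s0)).
    rewrite yE /Lw (bigD1 T) //= lerDl; apply: sumr_ge0 => *; apply: a0.
  rewrite /S (bigD1 s0) //= lerDl; apply: sumr_ge0 => *; apply: S0.
pose A (T : U P) : set R := if goodb T then `[0, M] else [set 0].
pose K := [set f : U P -> R | forall T, A T (f T)].
have cK : compact K.
  apply: (@tychonoff (U P) (fun _ => R) A) => T; rewrite /A.
  by case: goodb; [apply: segment_compact | apply: compact_set1].
have FK : (a @ \oo) K.
  apply: filterS evS => n Sn T; rewrite /A; case: (boolP (goodb T)) => gT.
    rewrite /= in_itv /= a0 /=; exact: le_trans (aS n T) (ltW Sn).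
  by rewrite ag.
have PF : ProperFilter (a @ \oo) by apply: fmap_proper_filter.
have [p [Kp clp]] := cK (a @ \oo) PF FK.
move: clp; rewrite cluster_cvgE /= => -[G PG [Gp FG]].
have lim : forall x l0, (fun n => Lw (a n) x) @ \oo --> l0 -> Lw p x = l0.
  move=> x l0 Hl0.
  have h1 : (fun f : U P -> R => \sum_(T : U P | x \in T) f T) @ G --> \sum_(T : U P | x \in T) p T.
    apply: (@cvg_big R (U P) +%R 0 (fun T => x \in T) add_continuous (U P -> R) G) => T _.
    apply: cvg_trans; last exact: (@proj_continuous (U P) (fun _ => R) T p).
    by apply: cvg_app; exact: Gp.
  have h2 : (fun f : U P -> R => \sum_(T : U P | x \in T) f T) @ G --> l0.
    by move=> B /Hl0 HB; apply: FG; exact: HB.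
  exact: (cvg_unique (@Rhausdorff R) h1 h2).
exists p; split.
- move=> T; have := Kp T; rewrite /A; case: goodb; last by move=> ->.
  by rewrite /= in_itv /= => /andP [].
- by move=> T gT; have := Kp T; rewrite /A (negPf gT).
- move=> s; case: (Hm s) => cv le; rewrite (lim (inl s) (m s)) //.
  by have -> : (fun n => Lw (a n) (inl s)) = (fun n => c n * (y n).1 s)
    by apply: funext => n; rewrite yE.
- move=> e; case: (Hl e) => cv le; rewrite (lim (inr e) (l e)) //.
  by have -> : (fun n => Lw (a n) (inr e)) = (fun n => c n * (y n).2 e)
    by apply: funext => n; rewrite yE2.
Qed.

End Topo.
End TopoPart.

Section Scale.
Variables (R : realType) (P : problem).
Local Notation goodb := (@goodb P).
Local Notation Lw := (@Lw R P).

Lemma good_src (T : U P) : goodb T -> exists s0, forall s, (inl s \in T) = (s == s0).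
Proof.
move/and3P => [/cards1P [s0 Hs0] _ _]; exists s0 => s.
by have := erefl (s \in srcs _ T); rewrite {2}Hs0 !inE.
Qed.

Lemma scale (lam : src P -> R) (om : edge P -> R) (p : U P -> R) :
  (forall s, 0 <= lam s) ->
  (forall T, 0 <= p T) -> (forall T, ~~ goodb T -> p T = 0) ->
  (forall s, lam s <= Lw p (inl s)) -> (forall e, Lw p (inr e) <= om e) ->
  exists w : U P -> R,
  [/\ (forall T, 0 <= w T), (forall T, ~~ goodb T -> w T = 0),
      (forall s, Lw w (inl s) = lam s) & (forall e, Lw w (inr e) <= om e)].
Proof.
move=> l0 p0 pg Hl Ho.
pose rho s := if Lw p (inl s) == 0 then 0 else lam s / Lw p (inl s).
have r0 : forall s, 0 <= rho s.
  move=> s; rewrite /rho; case: ifPn => // nz; apply: divr_ge0 => //.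
  by apply: le_trans (Hl s).
have r1 : forall s, rho s <= 1.
  move=> s; rewrite /rho; case: ifPn => // nz.
  have Lp : 0 < Lw p (inl s) by rewrite lt0r nz /=; apply: le_trans (Hl s).
  by rewrite ler_pdivrMr // mul1r.
have rL : forall s, rho s * Lw p (inl s) = lam s.
  move=> s; rewrite /rho; case: ifPn => [/eqP z|nz]; last by rewrite divfK.
  by rewrite mul0r; apply/eqP; rewrite eq_le l0 /= -z Hl.
have sumr : forall T, goodb T -> forall s0, inl s0 \in T ->
    \sum_(s | inl s \in T) rho s = rho s0.
  move=> T gT s0 s0T; have [s1 Hs1] := good_src _ gT.
  have e01 : s0 = s1 by apply/eqP; rewrite -Hs1.
  by rewrite (eq_bigl (fun s => s == s0)) ?big_pred1_eq // => s; rewrite Hs1 e01.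
pose q T := p T * \sum_(s | inl s \in T) rho s.
exists q; split.
- by move=> T; apply: mulr_ge0 => //; apply: sumr_ge0.
- by move=> T gT; rewrite /q pg ?mul0r.
- move=> s; rewrite -rL /Lw mulr_sumr; apply: eq_bigr => T sT.
  case: (boolP (goodb T)) => gT; last by rewrite /q pg ?mul0r ?mulr0.
  by rewrite /q (sumr T gT s sT) mulrC.
- move=> e; apply: le_trans (Ho e); apply: ler_sum => T _.
  case: (boolP (goodb T)) => gT; last by rewrite /q pg ?mul0r.
  have [s0 Hs0] := good_src _ gT.
  have s0T : inl s0 \in T by rewrite Hs0.
  by rewrite /q (sumr T gT s0 s0T) ler_piMr.
Qed.

End Scale.

Theorem theorem5 (R : realType) (P : problem) (acyc : acyclic P)
    (lam : src P -> R) (om : edge P -> R)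
    (lam_ge0 : forall s, 0 <= lam s) (om_ge0 : forall e, 0 <= om e) :
  achievable0 lam om <-> CL (@proj_region R P) (lam, om).
Proof.
split.
- move=> ach; have [w [w0 wg Hl Ho]] := w_of_achieve _ _ _ _ ach.
  have reg := region_of_w _ _ _ w0 wg.
  exists (fun _ => (fun s => Lw R P w (inl s), fun e => Lw R P w (inr e))), (fun _ => 1).
  split => //.
  + move=> e; exists (1 * Lw R P w (inr e)); first exact: cvg_cst.
    by rewrite mul1r.
  + move=> s; exists (1 * Lw R P w (inl s)); first exact: cvg_cst.
    by rewrite mul1r Hl.
- move=> cl; have [p [p0 pg Hl Ho]] := TopoPart.cl_to_p _ _ acyc _ _ cl.
  have [w [w0 wg Hl' Ho']] := scale _ _ _ _ _ lam_ge0 p0 pg Hl Ho.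
  exact: achieve_of_w _ _ _ _ _ w0 wg Hl' Ho'.
Qed.
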